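(* Let $a\ge b\gg1$. Define \[ E_<:=\Big\{(x,y)\in\mathbb{R}^2:\tfrac{x^2}{a^2}+\tfrac{y^2}{b^2}\le1\Big\},\qquad E_>:=\Big\{(x,y)\in\mathbb{R}^2:\tfrac{x^2}{(a+100\frac ab)^2}+\tfrac{y^2}{(b+100)^2}\ge1\Big\}. \] Then no square of side length $1$ in $\mathbb{R}^2$ intersects both $E_<$ and $E_>$. The same holds with $E_<,E_>$ replaced by \[ E'_<:=\Big\{(x,y):\tfrac{x^2}{(a-100\frac ab)^2}+\tfrac{y^2}{(b-100)^2}\le1\Big\},\qquad E'_>:=\Big\{(x,y):\tfrac{x^2}{a^2}+\tfrac{y^2}{b^2}\ge1\Big\}. \]
   Context: ''$b\gg1$'' means $b\ge C$ for a sufficiently large absolute constant $C$. *)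

(* Defs.v *)
From Stdlib Require Export Reals.
Open Scope R_scope.

Definition ellipse_le (A B x y : R) : Prop :=
  x ^ 2 / A ^ 2 + y ^ 2 / B ^ 2 <= 1.

Definition ellipse_ge (A B x y : R) : Prop :=
  x ^ 2 / A ^ 2 + y ^ 2 / B ^ 2 >= 1.

(* Q is a (closed, filled) square of side length 1 in R^2, in arbitrary
   position and orientation: Q = { c + s*u + t*u^perp : s, t in [0,1] }
   with u = (u1, u2) a unit vector and u^perp = (-u2, u1). *)
Definition is_unit_square (Q : R -> R -> Prop) : Prop :=
  exists x0 y0 u1 u2 : R,
    u1 ^ 2 + u2 ^ 2 = 1 /\
    forall x y : R,
      Q x y <-> exists s t : R, 0 <= s <= 1 /\ 0 <= t <= 1 /\
                 x = x0 + s * u1 - t * u2 /\ y = y0 + s * u2 + t * u1.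

Definition meets (Q S : R -> R -> Prop) : Prop := exists x y, Q x y /\ S x y.

(* Main.v *)
Require Import Defs.
From Stdlib Require Import Reals Lra Psatz.
Open Scope R_scope.

Lemma core1 (P1 P2 D1 D2 e : R) : 0 < e -> P1^2+P2^2 <= 1 -> D1^2+D2^2 <= 2*e^2 ->
  (P1+D1)^2+(P2+D2)^2 < (1+100*e)^2.
Proof.
  intros He Hp Hd.
  assert (Ht2 : (P1*D1+P2*D2)^2 <= 2*e^2).
  { pose proof (pow2_ge_0 (P1*D2-P2*D1)).
    assert ((P1^2+P2^2)*(D1^2+D2^2) = (P1*D1+P2*D2)^2 + (P1*D2-P2*D1)^2) by ring. nra. }
  assert (Ht : P1*D1+P2*D2 < 2*e) by nra.
  nra.
Qed.

Lemma core2 (P1 P2 D1 D2 e : R) : 0 < e -> 100*e < 1 -> P1^2+P2^2 <= (1-100*e)^2 -> D1^2+D2^2 <= 2*e^2 ->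
  (P1+D1)^2+(P2+D2)^2 < 1.
Proof.
  intros He He1 Hp Hd.
  assert (Ht2 : (P1*D1+P2*D2)^2 <= (1-100*e)^2*(2*e^2)).
  { pose proof (pow2_ge_0 (P1*D2-P2*D1)).
    assert ((P1^2+P2^2)*(D1^2+D2^2) = (P1*D1+P2*D2)^2 + (P1*D2-P2*D1)^2) by ring.
    pose proof (pow2_ge_0 D1); pose proof (pow2_ge_0 D2). nra. }
  assert (Ht : P1*D1+P2*D2 < 2*e*(1-100*e)).
  { destruct (Rlt_le_dec (P1*D1+P2*D2) (2*e*(1-100*e))) as [h|h]; auto.
    exfalso. assert (0 < 2*e*(1-100*e)) by nra. nra. }
  nra.
Qed.

Lemma sq_dist Q x y x' y' : is_unit_square Q -> Q x y -> Q x' y' -> (x'-x)^2+(y'-y)^2 <= 2.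
Proof.
  intros [x0 [y0 [u1 [u2 [Hu HQ]]]]] H1 H2.
  apply HQ in H1 as [s [t [Hs [Ht [-> ->]]]]].
  apply HQ in H2 as [s' [t' [Hs' [Ht' [-> ->]]]]].
  replace ((x0 + s' * u1 - t' * u2 - (x0 + s * u1 - t * u2)) ^ 2 +
   (y0 + s' * u2 + t' * u1 - (y0 + s * u2 + t * u1)) ^ 2) with
   (((s'-s)^2+(t'-t)^2)*(u1^2+u2^2)) by ring.
  rewrite Hu. nra.
Qed.

Lemma scaleD a b d1 d2 : 0 < b -> b <= a -> d1^2+d2^2 <= 2 ->
  (d1/a)^2+(d2/b)^2 <= 2*(1/b)^2.
Proof.
  intros Hb Hab Hd.
  assert (h1 : (d1/a)^2 <= (d1/b)^2).
  { unfold Rdiv. rewrite !Rpow_mult_distr.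
    apply Rmult_le_compat_l. nra.
    apply pow_incr. split.
    left; apply Rinv_0_lt_compat; lra. apply Rinv_le_contravar; lra. }
  assert ((d1/b)^2+(d2/b)^2 = (d1^2+d2^2)*(1/b)^2) by (field; lra).
  assert (0 <= (1/b)^2) by nra. nra.
Qed.

Theorem lemmaA3 :
  exists C : R, forall a b : R, C <= b -> b <= a ->
    forall Q : R -> R -> Prop, is_unit_square Q ->
      ~ (meets Q (ellipse_le a b) /\
         meets Q (ellipse_ge (a + 100 * (a / b)) (b + 100))) /\
      ~ (meets Q (ellipse_le (a - 100 * (a / b)) (b - 100)) /\
         meets Q (ellipse_ge a b)).
Proof.
  exists 200. intros a b Hb Hab Q HQ. split.
  - intros [[x [y [Q1 E1]]] [x' [y' [Q2 E2]]]].
    unfold ellipse_le, ellipse_ge in *.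
    pose proof (sq_dist _ _ _ _ _ HQ Q1 Q2) as Hd.
    pose proof (scaleD a b _ _ ltac:(lra) Hab Hd) as HD.
    assert (He : 0 < 1/b) by (apply Rdiv_lt_0_compat; lra).
    assert (Hp : (x/a)^2+(y/b)^2 <= 1).
    { replace ((x/a)^2+(y/b)^2) with (x ^ 2 / a ^ 2 + y ^ 2 / b ^ 2) by (field; lra). lra. }
    pose proof (core1 _ _ _ _ _ He Hp HD) as Hc.
    replace (x / a + (x' - x) / a) with (x'/a) in Hc by (field; lra).
    replace (y / b + (y' - y) / b) with (y'/b) in Hc by (field; lra).
    assert (HL : 0 < (1 + 100*(1/b))^2) by nra.
    replace (a + 100 * (a / b)) with (a * (1 + 100*(1/b))) in E2 by (field; lra).
    replace (b + 100) with (b * (1 + 100*(1/b))) in E2 by (field; lra).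
    assert (HL0 : 1 + 100*(1/b) <> 0) by lra.
    replace (x' ^ 2 / (a * (1 + 100*(1/b))) ^ 2 + y' ^ 2 / (b * (1 + 100*(1/b))) ^ 2) with
      (((x'/a)^2+(y'/b)^2) / (1 + 100*(1/b))^2) in E2 by (field; repeat split; lra).
    apply Rge_le in E2. apply Rmult_le_compat_r with (r := (1 + 100*(1/b))^2) in E2; [|lra].
    replace (((x'/a)^2+(y'/b)^2) / (1 + 100*(1/b))^2 * (1 + 100*(1/b))^2) with ((x'/a)^2+(y'/b)^2) in E2 by (field; lra).
    lra.
  - intros [[x [y [Q1 E1]]] [x' [y' [Q2 E2]]]].
    unfold ellipse_le, ellipse_ge in *.
    pose proof (sq_dist _ _ _ _ _ HQ Q1 Q2) as Hd.
    pose proof (scaleD a b _ _ ltac:(lra) Hab Hd) as HD.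
    assert (He : 0 < 1/b) by (apply Rdiv_lt_0_compat; lra).
    assert (He1 : 100*(1/b) < 1).
    { assert (1/b <= 1/200) by (apply Rmult_le_compat_l; [lra| apply Rinv_le_contravar; lra]). lra. }
    assert (HL : 0 < (1 - 100*(1/b))^2) by nra.
    replace (a - 100 * (a / b)) with (a * (1 - 100*(1/b))) in E1 by (field; lra).
    replace (b - 100) with (b * (1 - 100*(1/b))) in E1 by (field; lra).
    assert (HL0 : 1 - 100*(1/b) <> 0) by lra.
    replace (x ^ 2 / (a * (1 - 100*(1/b))) ^ 2 + y ^ 2 / (b * (1 - 100*(1/b))) ^ 2) with
      (((x/a)^2+(y/b)^2) / (1 - 100*(1/b))^2) in E1 by (field; repeat split; lra).
    apply Rmult_le_compat_r with (r := (1 - 100*(1/b))^2) in E1; [|lra].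
    replace (((x/a)^2+(y/b)^2) / (1 - 100*(1/b))^2 * (1 - 100*(1/b))^2) with ((x/a)^2+(y/b)^2) in E1 by (field; lra).
    rewrite Rmult_1_l in E1.
    pose proof (core2 _ _ _ _ _ He He1 E1 HD) as Hc.
    replace (x / a + (x' - x) / a) with (x'/a) in Hc by (field; lra).
    replace (y / b + (y' - y) / b) with (y'/b) in Hc by (field; lra).
    replace (x' ^ 2 / a ^ 2 + y' ^ 2 / b ^ 2) with ((x'/a)^2+(y'/b)^2) in E2 by (field; lra).
    lra.
Qed.
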